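(* Let $A$ be a finite alphabet. A language $L\subseteq A^*$ is definable by a sentence of $FO^2[<,\mathrm{Inv}]$ if and only if it is definable by a sentence of $FO^2[<,\mathrm{Th}]$. That is, as language classes, $FO^2[<,\mathrm{Inv}]=FO^2[<,\mathrm{Th}]$.
   Context: Words $w\in A^*$ are finite structures whose universe is the set of positions $\{1,\dots,|w|\}$; $w(i)$ denotes the $i$-th letter. For each $a\in A$ there is a unary predicate $a(x)$, true iff the letter at position $x$ is $a$, and the order $<$ on positions. A sentence $\phi$ defines the language $\{w\in A^*: w\models\phi\}$; formulas may be interpreted in the empty word, where every existentially quantified sentence is false and every universally quantified one is true. For $a\in A$, the binary ''between'' predicate $a(x,y)$ means $\exists z\,(x<z\wedge z<y\wedge a(z))$, i.e. the letter $a$ occurs strictly between positions $x$ and $y$. $FO^2[<,\mathrm{Inv}]$ is the set of first-order formulas built from $<$, the unary predicates $a(x)$ and the binary predicates $a(x,y)$ ($a\in A$) using only two variables (which may be reused). For $a\in A$ and $k\ge 0$, the predicate $(a,k)(x,y)$ means that $x<y$ and there are at least $k$ positions $z$ with $x<z<y$ and $w(z)=a$. $FO^2[<,\mathrm{Th}]$ is the two-variable logic built from $<$, the unary predicates $a(x)$, and all predicates $(a,k)(x,y)$ ($a\in A$, $k\ge 0$). *)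

(* Defs.v *)
From mathcomp Require Import all_boot.
Set Implicit Arguments. Unset Strict Implicit. Unset Printing Implicit Defensive.

(* Positions are the indices 0 .. size w - 1 (a shift by one of the paper's
   1 .. |w|, irrelevant for definability). *)

(* The two variables of the logic: [false] = x, [true] = y. *)
Definition var := bool.

Definition valuation := var -> nat.
Definition upd (nu : valuation) (v : var) (i : nat) : valuation :=
  fun u => if u == v then i else nu u.

Definition count_between {A : eqType} (w : seq A) (a : A) (i j : nat) : nat :=
  count (fun z => (i < z < j) && (onth w z == Some a)) (iota 0 (size w)).

Inductive fo2inv (A : Type) : Type :=
  | IFalse
  | IEq of var & var
  | ILt of var & var
  | ILetter of A & var
  | IBetween of A & var & var
  | INot of fo2inv A
  | IOr of fo2inv A & fo2inv A
  | IEx of var & fo2inv A.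

Fixpoint sat_inv {A : eqType} (w : seq A) (nu : valuation) (f : fo2inv A) : Prop :=
  match f with
  | IFalse => False
  | IEq u v => nu u = nu v
  | ILt u v => nu u < nu v
  | ILetter a u => onth w (nu u) = Some a
  | IBetween a u v => exists z, nu u < z < nu v /\ onth w z = Some a
  | INot g => ~ sat_inv w nu g
  | IOr g h => sat_inv w nu g \/ sat_inv w nu h
  | IEx v g => exists i, i < size w /\ sat_inv w (upd nu v i) g
  end.

Fixpoint free_inv {A : Type} (f : fo2inv A) (v : var) : bool :=
  match f with
  | IFalse => false
  | IEq u1 u2 | ILt u1 u2 | IBetween _ u1 u2 => (v == u1) || (v == u2)
  | ILetter _ u => v == u
  | INot g => free_inv g v
  | IOr g h => free_inv g v || free_inv h v
  | IEx u g => (v != u) && free_inv g v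
  end.

Definition sentence_inv {A : Type} (f : fo2inv A) : Prop :=
  forall v, free_inv f v = false.

Inductive fo2th (A : Type) : Type :=
  | TFalse
  | TEq of var & var
  | TLt of var & var
  | TLetter of A & var
  | TThr of A & nat & var & var
  | TNot of fo2th A
  | TOr of fo2th A & fo2th A
  | TEx of var & fo2th A.

Fixpoint sat_th {A : eqType} (w : seq A) (nu : valuation) (f : fo2th A) : Prop :=
  match f with
  | TFalse => False
  | TEq u v => nu u = nu v
  | TLt u v => nu u < nu v
  | TLetter a u => onth w (nu u) = Some a
  | TThr a k u v => nu u < nu v /\ k <= count_between w a (nu u) (nu v)
  | TNot g => ~ sat_th w nu g
  | TOr g h => sat_th w nu g \/ sat_th w nu h
  | TEx v g => exists i, i < size w /\ sat_th w (upd nu v i) g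
  end.

Fixpoint free_th {A : Type} (f : fo2th A) (v : var) : bool :=
  match f with
  | TFalse => false
  | TEq u1 u2 | TLt u1 u2 | TThr _ _ u1 u2 => (v == u1) || (v == u2)
  | TLetter _ u => v == u
  | TNot g => free_th g v
  | TOr g h => free_th g v || free_th h v
  | TEx u g => (v != u) && free_th g v
  end.

Definition sentence_th {A : Type} (f : fo2th A) : Prop :=
  forall v, free_th f v = false.

(* Language defined by a sentence (valuation irrelevant for sentences). *)
Definition nu0 : valuation := fun _ => 0.

Definition inv_definable {A : finType} (L : seq A -> Prop) : Prop :=
  exists f : fo2inv A, sentence_inv f /\ forall w, L w <-> sat_inv w nu0 f.

Definition th_definable {A : finType} (L : seq A -> Prop) : Prop :=
  exists f : fo2th A, sentence_th f /\ forall w, L w <-> sat_th w nu0 f.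

(* Main.v *)
Require Import Defs.
From mathcomp Require Import all_boot zify.
From Stdlib Require Import Classical.

Set Implicit Arguments. Unset Strict Implicit.


Definition ITrue {A} : fo2inv A := INot (IFalse A).
Definition IAnd {A} (f g : fo2inv A) : fo2inv A := INot (IOr (INot f) (INot g)).

Lemma nn_and (P Q : Prop) : ~ (~ P \/ ~ Q) <-> P /\ Q.
Proof. split; last tauto. move=> H; split; apply: NNPP; tauto. Qed.

Lemma sat_ex {A : eqType} (w : seq A) nu v g :
  sat_inv w nu (IEx v g) <-> exists i, i < size w /\ sat_inv w (upd nu v i) g.
Proof. by []. Qed.

Lemma sat_and {A : eqType} (w : seq A) nu f g :
  sat_inv w nu (IAnd f g) <-> sat_inv w nu f /\ sat_inv w nu g.
Proof. exact: nn_and. Qed.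

Lemma upd_same nu v i : upd nu v i v = i.
Proof. by rewrite /upd eqxx. Qed.
Lemma upd_other nu v i : upd nu v i (~~ v) = nu (~~ v).
Proof. by rewrite /upd; case: v. Qed.

Lemma sat_ext {A : eqType} (w : seq A) f : forall nu nu',
  (forall u, nu u = nu' u) -> (sat_inv w nu f <-> sat_inv w nu' f).
Proof.
elim: f => [|u v|u v|a u|a u v|g IH|g IHg h IHh|v g IH] nu nu' E /=;
  rewrite ?E //.
- by have := IH _ _ E; tauto.
- by have := IHg _ _ E; have := IHh _ _ E; tauto.
- split=> [[i [Hi H]]|[i [Hi H]]]; exists i; split=> //.
  + apply: (proj1 (IH (upd nu v i) (upd nu' v i) _) H) => u.
    by rewrite /upd E.
  + apply: (proj2 (IH (upd nu v i) (upd nu' v i) _) H) => u.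
    by rewrite /upd E.
Qed.

Lemma sat_ext' {A : eqType} (w : seq A) f nu nu' :
  sat_inv w nu f -> (forall u, nu u = nu' u) -> sat_inv w nu' f.
Proof. by move=> H E; apply: (proj1 (sat_ext w f E)). Qed.

Definition atvar {A} (c : var) (f : fo2inv A) : fo2inv A :=
  IEx (~~ c) (IAnd (IEq _ false true) f).

Lemma sat_atvar {A : eqType} (w : seq A) nu c f :
  sat_inv w nu (atvar c f) <-> nu c < size w /\ sat_inv w (fun _ => nu c) f.
Proof.
rewrite /atvar; split.
- move=> [j [Hj /nn_and [E H]]]; simpl in E.
  change (sat_inv w (upd nu (~~ c) j) f) in H.
  have Ej : j = nu c by case: c E H; rewrite /upd /=.
  subst j; split=> //; apply: (sat_ext' H) => u.
  by move: u; case: c {H E Hj} => -[]; rewrite /upd.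
- move=> [Hc H]; exists (nu c); split=> //; apply/nn_and; split.
  + by case: c {H Hc}; rewrite /upd.
  + apply: (sat_ext' H) => u.
    by move: u; case: c {H Hc} => -[]; rewrite /upd.
Qed.

Definition bigOr {A T} (s : seq T) (F : T -> fo2inv A) : fo2inv A :=
  foldr (fun t g => IOr (F t) g) (IFalse A) s.
Definition bigAnd {A T} (s : seq T) (F : T -> fo2inv A) : fo2inv A :=
  foldr (fun t g => IAnd (F t) g) ITrue s.

Lemma sat_bigOr {A : eqType} {T : eqType} (w : seq A) nu (s : seq T) F :
  sat_inv w nu (bigOr s F) <-> exists2 t, t \in s & sat_inv w nu (F t).
Proof.
elim: s => [|t s IH] /=; first by split=> // -[].
rewrite IH; split.
- by move=> [H|[t' Ht' H]]; [exists t; rewrite ?mem_head | exists t'; rewrite // inE Ht' orbT].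
- move=> [t' ]; rewrite inE => /orP [/eqP ->|Ht'] H; first by left.
  by right; exists t'.
Qed.

Lemma sat_bigAnd {A : eqType} {T : eqType} (w : seq A) nu (s : seq T) F :
  sat_inv w nu (bigAnd s F) <-> forall t, t \in s -> sat_inv w nu (F t).
Proof.
elim: s => [|t s IH]; first by split=> //= _ [].
change (sat_inv w nu (IAnd (F t) (bigAnd s F)) <->
  forall t0, t0 \in t :: s -> sat_inv w nu (F t0)).
split.
- move=> /sat_and [H1 /IH H2] t'; rewrite inE => /orP [/eqP ->|]; auto.
- move=> H; apply/sat_and; split; first by apply: H; rewrite mem_head.
  by apply/IH => t' Ht'; apply: H; rewrite inE Ht' orbT.
Qed.

Lemma count_add3 T (p p1 p2 p3 : pred T) s :
  (forall z, p z = p1 z + p2 z + p3 z :> nat) ->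
  count p s = count p1 s + count p2 s + count p3 s.
Proof.
move=> H; elim: s => //= z s ->; rewrite H; lia.
Qed.

Lemma cnt_split {A : eqType} (w : seq A) a i q j : i < q -> q < j ->
  count_between w a i j =
  count_between w a i q + (onth w q == Some a) + count_between w a q j.
Proof.
move=> iq qj; rewrite /count_between.
rewrite (@count_add3 _ _ (fun z => (i < z < q) && (onth w z == Some a))
  (fun z => (z == q) && (onth w z == Some a))
  (fun z => (q < z < j) && (onth w z == Some a))).
  congr (_ + _ + _).
  rewrite (eq_count (a2 := fun z => (onth w q == Some a) && (z == q))); last first.
    by move=> z /=; case: eqP => [->|]; rewrite ?andbT ?andbF.
  case: (onth w q =P Some a) => [Hq|]; last by rewrite count_pred0.
  have qn : q < size w by case: ltnP Hq => // /onth_default ->.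
  rewrite (eq_count (a2 := pred1 q)) // count_uniq_mem ?iota_uniq //.
  by rewrite mem_iota add0n qn.
move=> z; case: (onth w z == Some a); rewrite ?andbT ?andbF //.
case: (ltngtP z q) => [zq|qz|->].
- have zj: z < j by exact: ltn_trans zq qj.
  by rewrite zj; case: (i < z).
- have iz: i < z by exact: ltn_trans iq qz.
  by rewrite iz; case: (z < j).
- by rewrite iq qj.
Qed.

Lemma cnt0 {A : eqType} (w : seq A) a i j :
  count_between w a i j = 0 <-> ~ exists z, i < z < j /\ onth w z = Some a.
Proof.
rewrite /count_between; split.
- move=> H [z [Hz Ha]].
  have zn : z < size w by case: ltnP Ha => // /onth_default ->.
  have: 0 < count (fun z => (i < z < j) && (onth w z == Some a)) (iota 0 (size w)).
    rewrite -has_count; apply/hasP; exists z; first by rewrite mem_iota.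
    by rewrite Hz Ha eqxx.
  by rewrite H.
- move=> H; apply/eqP; rewrite -leqn0 leqNgt -has_count; apply/negP => /hasP [z _].
  by move=> /andP [Hz /eqP Ha]; apply: H; exists z.
Qed.


Definition ltd (d : bool) (i j : nat) := if d then i < j else j < i.
Definition cntd {A : eqType} (w : seq A) d a i j :=
  if d then count_between w a i j else count_between w a j i.
Definition btwd {A : eqType} (w : seq A) d a i j :=
  exists z, (if d then i < z < j else j < z < i) /\ onth w z = Some a.

Lemma ltd_trans d i q j : ltd d i q -> ltd d q j -> ltd d i j.
Proof. by case: d => /= H1 H2; [exact: ltn_trans H1 H2 | exact: ltn_trans H2 H1]. Qed.

Lemma split_d {A : eqType} (w : seq A) d a i q j : ltd d i q -> ltd d q j ->
  cntd w d a i j = cntd w d a i q + (onth w q == Some a) + cntd w d a q j.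
Proof.
case: d => /= H1 H2; first exact: cnt_split.
rewrite (cnt_split w a H2 H1); lia.
Qed.

Lemma cnt0_d {A : eqType} (w : seq A) d a i j :
  cntd w d a i j = 0 <-> ~ btwd w d a i j.
Proof. by case: d; rewrite /cntd /btwd cnt0. Qed.

Lemma nearest d i j (P : pred nat) :
  (exists z, [&& ltd d i z, ltd d z j & P z]) ->
  exists q, [/\ ltd d i q, ltd d q j, P q &
    forall z, ltd d i z -> ltd d z q -> ~~ P z].
Proof.
move=> ex; case: d ex => ex.
- case: (ex_minnP ex) => q /and3P [H1 H2 H3] Hmin.
  exists q; split=> // z /= iz zq; apply/negP => Pz.
  have := Hmin z; rewrite /= iz Pz (ltn_trans zq H2) /= => /(_ isT).
  by rewrite leqNgt zq.
- have ub : forall z, [&& ltd false i z, ltd false z j & P z] -> z <= i.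
    by move=> z /and3P [H _ _]; exact: ltnW.
  case: (ex_maxnP ex ub) => q /and3P [H1 H2 H3] Hmax.
  exists q; split=> // z /= iz zq; apply/negP => Pz.
  have := Hmax z; rewrite /= iz Pz (ltn_trans H2 zq) /= => /(_ isT).
  by rewrite leqNgt zq.
Qed.

Section Walk.
Variable A : finType.
Variable s : A -> bool.
Variable beta : fo2inv A.
Variable d : bool.

Definition LtF (c c' : var) : fo2inv A := if d then ILt A c c' else ILt A c' c.
Definition BtF a (c c' : var) : fo2inv A :=
  if d then IBetween a c c' else IBetween a c' c.

Lemma sat_LtF w nu c c' : sat_inv w nu (LtF c c') <-> ltd d (nu c) (nu c').
Proof. by rewrite /LtF /ltd; case: d. Qed.
Lemma sat_BtF w nu a c c' : sat_inv w nu (BtF a c c') <-> btwd w d a (nu c) (nu c').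
Proof. by rewrite /BtF /btwd; case: d. Qed.

Definition Dset (e : A -> nat) a := (0 < e a) || ~~ s a.
Definition noD e c c' :=
  bigAnd [seq a <- enum A | Dset e a] (fun a => INot (BtF a c c')).
Definition dec (e : A -> nat) a := fun b => if b == a then (e b).-1 else e b.

Lemma sat_noD w nu e c c' :
  sat_inv w nu (noD e c c') <->
  forall a, Dset e a -> ~ btwd w d a (nu c) (nu c').
Proof.
rewrite /noD sat_bigAnd; split.
- move=> H a Da; apply/(sat_BtF w nu a c c'); apply: H.
  by rewrite mem_filter Da mem_enum.
- move=> H a; rewrite mem_filter mem_enum andbT => Da /=.
  by move/sat_BtF; apply: H.
Qed.

Definition base e c : fo2inv A :=
  if [forall a, e a == 0] then
    IEx (~~ c) (IAnd (LtF c (~~ c)) (IAnd (noD e c (~~ c)) (atvar (~~ c) beta)))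
  else IFalse A.

Fixpoint Fwd n e c : fo2inv A :=
  match n with
  | 0 => base e c
  | n'.+1 => IOr (base e c)
      (bigOr [seq a <- enum A | 0 < e a] (fun a =>
        IEx (~~ c) (IAnd (LtF c (~~ c)) (IAnd (ILetter a (~~ c))
          (IAnd (noD e c (~~ c)) (Fwd n' (dec e a) (~~ c)))))))
  end.

Definition req (e : A -> nat) (cnt : A -> nat) :=
  forall a, if s a then e a <= cnt a else cnt a == e a.

Definition WSem w e i := exists j, [/\ j < size w, ltd d i j,
  sat_inv w (fun _ => j) beta & req e (fun a => cntd w d a i j)].

Lemma upd_c (nu : valuation) c j : upd nu (~~ c) j c = nu c.
Proof. by rewrite /upd; case: c. Qed.

Lemma base_sem w nu e c :
  sat_inv w nu (base e c) <-> (forall a, e a = 0) /\ WSem w e (nu c).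
Proof.
rewrite /base; case: forallP => [E0|NE]; last first.
  split=> // -[H _]; case: NE => a; by rewrite H.
have E0' : forall a, e a = 0 by move=> a; apply/eqP.
split.
- move/sat_ex=> [j [Hj /sat_and [H1 /sat_and [H2 H3]]]]; split=> //.
  move/sat_LtF: H1; move/sat_noD: H2; move/sat_atvar: H3.
  rewrite upd_same upd_c => -[_ Hb] HD Hl.
  exists j; split=> // a; rewrite E0'; case: ifP => // sa.
  by apply/eqP/cnt0_d; apply: HD; rewrite /Dset sa orbT.
- move=> [_ [j [Hj Hl Hb Hr]]]; apply/sat_ex; exists j; split=> //.
  apply/sat_and; split; first by apply/sat_LtF; rewrite upd_same upd_c.
  apply/sat_and; split; last by apply/sat_atvar; rewrite upd_same.
  apply/sat_noD; rewrite upd_same upd_c => a.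
  rewrite /Dset E0' /= => sa; apply/cnt0_d.
  by have := Hr a; rewrite (negbTE sa) E0' => /eqP.
Qed.

Lemma btw_ltd i z q : (if d then i < z < q else q < z < i) = ltd d i z && ltd d z q.
Proof. by rewrite /ltd; case: d => //; rewrite andbC. Qed.

Lemma onth_size (w : seq A) q a : onth w q = Some a -> q < size w.
Proof. by case: ltnP => // /onth_default ->. Qed.

Lemma sum_dec e a : 0 < e a -> (\sum_(b : A) dec e a b).+1 = \sum_(b : A) e b.
Proof.
move=> ea; rewrite [in RHS](bigD1 a) // [in LHS](bigD1 a) //= /dec eqxx.
rewrite (eq_bigr e); first by rewrite -addSn prednK.
by move=> b /negbTE ->.
Qed.

Lemma stepB w e i a q : ltd d i q -> onth w q = Some a -> 0 < e a ->
  (forall b, Dset e b -> ~ btwd w d b i q) -> WSem w (dec e a) q -> WSem w e i.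
Proof.
move=> iq Hq ea HD [j [Hj qj Hb Hr]]; exists j; split=> //.
  exact: ltd_trans iq qj.
move=> b; rewrite (split_d w b iq qj).
have := Hr b; rewrite /dec Hq.
case Db: (Dset e b); last first.
  move: Db; rewrite /Dset; case: (s b) => /=; rewrite ?orbF ?orbT //.
  by move=> /negbT; rewrite -leqNgt leqn0 => /eqP ->.
have -> : cntd w d b i q = 0 by apply/cnt0_d; exact: HD.
case: (eqVneq b a) => [->|nba]; rewrite ?eqxx.
- case: (s a) => /=; last move=> /eqP; lia.
- have -> : (Some a == Some b) = false.
    by apply/negbTE; apply/eqP => -[E]; move: nba; rewrite E eqxx.
  by rewrite add0n.
Qed.

Lemma stepC w e i : WSem w e i -> (forall a, e a = 0) \/
  exists a q, [/\ 0 < e a, q < size w, ltd d i q, onth w q = Some a &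
     (forall b, Dset e b -> ~ btwd w d b i q) /\ WSem w (dec e a) q].
Proof.
move=> [j [Hj ij Hb Hr]].
pose P := fun z => if onth w z is Some b then Dset e b else false.
case: (classic (exists z, [&& ltd d i z, ltd d z j & P z])) => [ex|nex].
- right; have [q [iq qj Pq Hn]] := nearest ex.
  move: Pq; rewrite /P; case Hq: (onth w q) => [a|] // Da.
  have HD : forall b, Dset e b -> ~ btwd w d b i q.
    move=> b Db [z [Hz Hzb]]; move: Hz; rewrite btw_ltd => /andP [iz zq].
    by have := Hn z iz zq; rewrite /P Hzb Db.
  have ea : 0 < e a.
    case: (posnP (e a)) => // ea0; move: Da; rewrite /Dset ea0 /= => sa.
    have := Hr a; rewrite (negbTE sa) (split_d w a iq qj) Hq eqxx ea0.
    by move=> /eqP; lia.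
  exists a, q; split=> //; first exact: onth_size Hq.
  split=> //; exists j; split=> // b; have := Hr b; rewrite (split_d w b iq qj) /dec.
  case Db: (Dset e b); last first.
    move: Db; rewrite /Dset; case: (s b) => /=; rewrite ?orbF ?orbT //.
    by move=> /negbT; rewrite -leqNgt leqn0 => /eqP ->; case: (b == a).
  have -> : cntd w d b i q = 0 by apply/cnt0_d; exact: HD.
  case: (eqVneq b a) => [->|nba]; rewrite ?eqxx ?Hq ?eqxx.
  + case: (s a) => /=; [lia| move=> /eqP H; apply/eqP; lia].
  + have -> : (Some a == Some b) = false.
      by apply/negbTE; apply/eqP => -[E]; move: nba; rewrite E eqxx.
    by rewrite add0n.
- left => b; have := Hr b.
  case Db: (Dset e b); last first.
    move: Db; rewrite /Dset; case: (s b) => /=; rewrite ?orbF ?orbT //.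
    by move=> /negbT; rewrite -leqNgt leqn0 => /eqP.
  have -> : cntd w d b i j = 0.
    apply/cnt0_d => -[z [Hz Hzb]]; apply: nex; exists z.
    by move: Hz; rewrite btw_ltd => /andP [iz zj]; rewrite iz zj /P Hzb.
  by case: (s b) => [|/eqP]; lia.
Qed.

Lemma Fwd_ok w n : forall e c nu, \sum_(b : A) e b <= n ->
  (sat_inv w nu (Fwd n e c) <-> WSem w e (nu c)).
Proof.
elim: n => [|n IH] e c nu Hs.
  rewrite /Fwd base_sem; split=> [[]//|H]; split=> // a.
  apply/eqP; rewrite -leqn0; apply: leq_trans Hs.
  by rewrite (bigD1 a) //= leq_addr.
change (sat_inv w nu (base e c) \/ sat_inv w nu (bigOr [seq a <- enum A | 0 < e a] (fun a =>
        IEx (~~ c) (IAnd (LtF c (~~ c)) (IAnd (ILetter a (~~ c))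
          (IAnd (noD e c (~~ c)) (Fwd n (dec e a) (~~ c))))))) <-> WSem w e (nu c)).
rewrite base_sem sat_bigOr; split.
- move=> [[_ //]|[a]]; rewrite mem_filter mem_enum andbT => ea.
  move/sat_ex => [q [Hq /sat_and [H1 /sat_and [H2 /sat_and [H3 H4]]]]].
  move/sat_LtF: H1; rewrite upd_same upd_c => iq.
  move: H2 => /= ; rewrite upd_same => Ha.
  move/sat_noD: H3; rewrite upd_same upd_c => HD.
  move/IH: H4; rewrite upd_same => H4.
  apply: (stepB iq Ha ea HD); apply: H4.
  by rewrite -ltnS sum_dec.
- move=> H; case: (stepC H) => [E0|[a [q [ea Hq iq Ha [HD Hw]]]]].
    by left.
  right; exists a; first by rewrite mem_filter mem_enum ea.
  apply/sat_ex; exists q; split=> //.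
  apply/sat_and; split; first by apply/sat_LtF; rewrite upd_same upd_c.
  apply/sat_and; split; first by rewrite /= upd_same.
  apply/sat_and; split; first by apply/sat_noD; rewrite upd_same upd_c.
  apply/IH; first by rewrite -ltnS sum_dec.
  by rewrite upd_same.
Qed.

End Walk.


Inductive mix (A : Type) : Type :=
  | MC of bool
  | MB of fo2inv A & var
  | MEq of var & var
  | MLt of var & var
  | MThr of A & nat & var & var
  | MNot of mix A
  | MOr of mix A & mix A.

Fixpoint msat {A : eqType} (w : seq A) (nu : valuation) (m : mix A) : Prop :=
  match m with
  | MC b => b
  | MB f u => sat_inv w (fun _ => nu u) f
  | MEq u v => nu u = nu v
  | MLt u v => nu u < nu v
  | MThr a k u v => nu u < nu v /\ k <= count_between w a (nu u) (nu v)
  | MNot m => ~ msat w nu m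
  | MOr m1 m2 => msat w nu m1 \/ msat w nu m2
  end.

Fixpoint nb {A} (m : mix A) : nat :=
  match m with
  | MB _ _ => 1
  | MNot m => nb m
  | MOr m1 m2 => nb m1 + nb m2
  | _ => 0
  end.

Fixpoint maxthr {A} (m : mix A) : nat :=
  match m with
  | MThr _ k _ _ => k
  | MNot m => maxthr m
  | MOr m1 m2 => maxn (maxthr m1) (maxthr m2)
  | _ => 0
  end.

Lemma msat_ext {A : eqType} (w : seq A) m nu nu' :
  (forall u, nu u = nu' u) -> (msat w nu m <-> msat w nu' m).
Proof.
move=> E; elim: m => [b|f u|u v|u v|a k u v|m IH|m1 IH1 m2 IH2] /=; rewrite ?E //.
- by tauto.
- by tauto.
Qed.

Lemma shannon {A : eqType} (m : mix A) : 0 < nb m -> exists f u m1 m0,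
  [/\ nb m1 < nb m, nb m0 < nb m & forall w nu,
    (sat_inv w (fun _ => nu u) f -> (msat w nu m <-> msat w nu m1)) /\
    (~ sat_inv w (fun _ => nu u) f -> (msat w nu m <-> msat w nu m0))].
Proof.
elim: m => [b|f u|u v|u v|a k u v|m IH|m1 IH1 m2 IH2] //=.
- move=> _; exists f, u, (MC _ true), (MC _ false); split=> // w nu /=.
- move=> /IH [f [u [n1 [n0 [H1 H0 H]]]]].
  exists f, u, (MNot n1), (MNot n0); split=> // w nu.
  have [Ha Hb] := H w nu; split=> B /=.
  + by have := Ha B; tauto.
  + by have := Hb B; tauto.
- case: (posnP (nb m1)) => [z1|p1] Hp.
  + have /IH2 [f [u [n1 [n0 [H1 H0 H]]]]] : 0 < nb m2 by rewrite z1 in Hp.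
    exists f, u, (MOr m1 n1), (MOr m1 n0); split=> /=; [lia|lia|] => w nu.
    have [Ha Hb] := H w nu; split=> B /=.
    * by have := Ha B; tauto.
    * by have := Hb B; tauto.
  + have [f [u [n1 [n0 [H1 H0 H]]]]] := IH1 p1.
    exists f, u, (MOr n1 m2), (MOr n0 m2); split=> /=; [lia|lia|] => w nu.
    have [Ha Hb] := H w nu; split=> B /=.
    * by have := Ha B; tauto.
    * by have := Hb B; tauto.
Qed.

Lemma var_cases (u v : var) : u = v \/ u = ~~ v.
Proof. by case: u; case: v; auto. Qed.

Definition ordc (i j : nat) : nat := if i < j then 0 else if i == j then 1 else 2.

Lemma ordc0 i j : (ordc i j == 0) = (i < j).
Proof. by rewrite /ordc; case: ltngtP. Qed.
Lemma ordc1 i j : (ordc i j == 1) = (i == j).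
Proof. by rewrite /ordc; case: ltngtP. Qed.
Lemma ordc2 i j : (ordc i j == 2) = (j < i).
Proof. by rewrite /ordc; case: ltngtP. Qed.

Definition prof {A : eqType} (w : seq A) K i j a :=
  minn (if i < j then count_between w a i j else count_between w a j i) K.

Fixpoint coreval {A : eqType} (m : mix A) (v : var) (o : nat) (p : A -> nat) : bool :=
  match m with
  | MC b => b
  | MB _ _ => false
  | MEq u u' => (u == u') || (o == 1)
  | MLt u u' => (u != u') && (if u == v then o == 2 else o == 0)
  | MThr a k u u' => [&& u != u', (if u == v then o == 2 else o == 0) & k <= p a]
  | MNot m => ~~ coreval m v o p
  | MOr m1 m2 => coreval m1 v o p || coreval m2 v o p
  end.

Lemma coreval_ext {A : eqType} (m : mix A) v o p p' : p =1 p' ->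
  coreval m v o p = coreval m v o p'.
Proof.
move=> E; elim: m => //= [a k u u'|m ->|m1 -> m2 ->] //.
by rewrite E.
Qed.

Lemma core_ok {A : eqType} (w : seq A) nu v j (m : mix A) K :
  nb m = 0 -> maxthr m <= K ->
  (msat w (upd nu v j) m <->
   coreval m v (ordc (nu (~~ v)) j) (prof w K (nu (~~ v)) j)).
Proof.
have Hv : (v == ~~ v) = false by clear; case: v.
have Hv' : (~~ v == v) = false by move: Hv; case: v.
set i := nu (~~ v).
elim: m => [b|f u|u u'|u u'|a k u u'|m IH|m1 IH1 m2 IH2] //= Hn HK.
- case: (var_cases u v) => Eu; case: (var_cases u' v) => Eu'; rewrite Eu Eu';
    rewrite ?upd_same ?upd_other ?eqxx ?Hv ?Hv' /= ?ordc1 -/i;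
    split=> H; first [done | by rewrite H eqxx | by move/eqP: H => ->].
- case: (var_cases u v) => Eu; case: (var_cases u' v) => Eu'; rewrite Eu Eu';
    rewrite ?upd_same ?upd_other ?eqxx ?Hv ?Hv' /= ?ordc0 ?ordc2 -/i ?ltnn //.
- case: (var_cases u v) => Eu; case: (var_cases u' v) => Eu'; rewrite Eu Eu';
    rewrite ?upd_same ?upd_other ?eqxx ?Hv ?Hv' /= ?ordc0 ?ordc2 -/i ?ltnn /prof.
  + by split=> -[].
  + case: (ltnP j i) => ji /=; last by split=> -[].
    rewrite ltnNge (ltnW ji) /= leq_min HK andbT; by split=> [[_ H]|H].
  + case: (ltnP i j) => ij /=; last by split=> -[].
    rewrite leq_min HK andbT; by split=> [[_ H]|H].
  + by split=> -[].
- have H := IH Hn HK; split=> [Hm|/negP Hc Hm].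
  + by apply/negP => Hc; apply: Hm; apply/H.
  + by apply: Hc; apply/H.
- move: Hn HK; rewrite geq_max => /eqP; rewrite addn_eq0 => /andP [/eqP n1 /eqP n2] /andP [k1 k2].
  have H1 := IH1 n1 k1; have H2 := IH2 n2 k2.
  split=> [[Hm|Hm]|/orP [Hc|Hc]].
  + by apply/orP; left; apply/H1.
  + by apply/orP; right; apply/H2.
  + by left; apply/H1.
  + by right; apply/H2.
Qed.

Lemma minn_req c e K : e <= K ->
  (minn c K = e <-> (if e == K then e <= c else c == e)).
Proof.
move=> eK; case: (eqVneq e K) => [->|ne] /=.
- split; lia.
- split=> [H|/eqP H]; [apply/eqP|]; lia.
Qed.

Lemma cb_self {A : eqType} (w : seq A) a i : count_between w a i i = 0.
Proof. apply/cnt0 => -[z [/andP [H1 H2] _]]; lia. Qed.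

Lemma sat_or {A : eqType} (w : seq A) nu f g :
  sat_inv w nu (IOr f g) <-> sat_inv w nu f \/ sat_inv w nu g.
Proof. by []. Qed.

Section Core.
Variable A : finType.

Definition walkF (v : var) (beta : fo2inv A) K (o : nat) (g : A -> nat) : fo2inv A :=
  if o == 1 then (if [forall a, g a == 0] then atvar (~~ v) beta else IFalse A)
  else Fwd (fun a => g a == K) beta (o == 0) (\sum_(b : A) g b) g (~~ v).

Lemma walk_ok w nu v beta K o g : o < 3 -> (forall a, g a <= K) ->
  nu (~~ v) < size w ->
  (sat_inv w nu (walkF v beta K o g) <->
   exists j, [/\ j < size w, sat_inv w (fun _ => j) beta, ordc (nu (~~ v)) j = o &
     forall a, prof w K (nu (~~ v)) j a = g a]).
Proof.
move=> o3 gK iS; rewrite /walkF.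
case: (eqVneq o 1) => [->|o1] /=.
  case: forallP => [G0|NG].
  - rewrite sat_atvar; split.
    + move=> [_ Hb]; exists (nu (~~ v)); split=> //.
      * by rewrite /ordc ltnn eqxx.
      * by move=> a; rewrite /prof ltnn cb_self min0n; apply/esym/eqP.
    + move=> [j [_ Hb /eqP]]; rewrite ordc1 => /eqP E _; subst j; by split.
  - split=> // -[j [_ _ /eqP]]; rewrite ordc1 => /eqP E Hp; subst j.
    case: NG => a.
    by rewrite -Hp /prof ltnn cb_self min0n.
rewrite (Fwd_ok _ _ _ _ _ _ (leqnn _)) /WSem.
have Hd : forall j, ltd (o == 0) (nu (~~ v)) j <-> ordc (nu (~~ v)) j = o.
  move=> j; rewrite /ltd; case: (eqVneq o 0) => [->|o0] /=.
    by split=> [H|/eqP]; [apply/eqP; rewrite ordc0 | rewrite ordc0].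
  have o2 : o = 2 by lia.
  by subst o; split=> [H|/eqP]; [apply/eqP; rewrite ordc2 | rewrite ordc2].
split.
- move=> [j [Hj Hl Hb Hr]]; exists j; split=> //; first exact/Hd.
  move=> a; apply/minn_req => //; have := Hr a.
  move: Hl; rewrite /prof /cntd /ltd; case: (o == 0) => Hl.
  + by rewrite Hl.
  + by rewrite ltnNge (ltnW Hl).
- move=> [j [Hj Hb Ho Hp]]; exists j; have Hl := proj2 (Hd j) Ho; split=> //.
  move=> a; have := Hp a; move/minn_req => /(_ (gK a)).
  move: Hl; rewrite /prof /cntd /ltd; case: (o == 0) => Hl.
  + by rewrite Hl.
  + by rewrite ltnNge (ltnW Hl).
Qed.

Definition coreF (m : mix A) (v : var) (beta : fo2inv A) : fo2inv A :=
  let K := maxthr m in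
  bigOr [:: 0; 1; 2] (fun o =>
    bigOr [seq g <- enum {ffun A -> 'I_K.+1} |
              coreval m v o (fun a => nat_of_ord ((g : {ffun A -> 'I_K.+1}) a))]
      (fun g : {ffun A -> 'I_K.+1} => walkF v beta K o (fun a => nat_of_ord (g a)))).

Lemma coreF_ok w nu (m : mix A) v beta : nb m = 0 -> nu (~~ v) < size w ->
  (sat_inv w nu (coreF m v beta) <->
   exists j, [/\ j < size w, sat_inv w (fun _ => j) beta & msat w (upd nu v j) m]).
Proof.
move=> Hn iS; rewrite /coreF sat_bigOr; split.
- move=> [o Ho /sat_bigOr [g]]; rewrite mem_filter mem_enum andbT => Hc.
  have o3 : o < 3 by move: Ho; rewrite !inE => /or3P [] /eqP ->.
  have gK : forall a, g a <= maxthr m by move=> a; rewrite -ltnS.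
  move/(walk_ok beta o3 gK iS) => [j [Hj Hb Ho' Hp]].
  exists j; split=> //; apply/(core_ok _ _ _ _ Hn (leqnn _)).
  by rewrite Ho' (coreval_ext _ _ _ Hp).
- move=> [j [Hj Hb Hm]].
  have /(core_ok _ _ _ _ Hn (leqnn _)) Hc := Hm.
  set i := nu (~~ v) in Hc.
  exists (ordc i j).
    by rewrite /ordc !inE; case: (i < j); case: (i == j).
  apply/sat_bigOr.
  pose g : {ffun A -> 'I_(maxthr m).+1} :=
    [ffun a => inord (prof w (maxthr m) i j a)].
  have Hg : forall a, (fun a => nat_of_ord (g a)) a = prof w (maxthr m) i j a.
    by move=> a; rewrite /g ffunE inordK // ltnS geq_minr.
  exists g.
    by rewrite mem_filter mem_enum andbT (coreval_ext _ _ _ Hg).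
  apply/walk_ok => //.
  + by rewrite /ordc; case: (i < j); case: (i == j).
  + by move=> a; rewrite -ltnS.
  + by exists j; split.
Qed.

Lemma KEY n : forall (m : mix A), nb m <= n -> forall v beta, exists f,
  forall w nu, nu (~~ v) < size w ->
   (sat_inv w nu f <->
    exists j, [/\ j < size w, sat_inv w (fun _ => j) beta & msat w (upd nu v j) m]).
Proof.
elim: n => [|n IH] m Hn v beta.
  have Hn0 : nb m = 0 by apply/eqP; rewrite -leqn0.
  by exists (coreF m v beta) => w nu iS; apply: coreF_ok.
case: (posnP (nb m)) => [H0|Hp].
  by exists (coreF m v beta) => w nu iS; apply: coreF_ok.
have [f [u [m1 [m0 [H1 H0 H]]]]] := shannon Hp.
have Hm1 : nb m1 <= n by rewrite -ltnS; exact: leq_trans H1 Hn.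
have Hm0 : nb m0 <= n by rewrite -ltnS; exact: leq_trans H0 Hn.
case: (var_cases u v) => Eu.
- subst u.
  have [F1 HF1] := IH m1 Hm1 v (IAnd beta f).
  have [F0 HF0] := IH m0 Hm0 v (IAnd beta (INot f)).
  exists (IOr F1 F0) => w nu iS /=; rewrite (HF1 w nu iS) (HF0 w nu iS).
  split.
  + move=> [[j [Hj /sat_and [Hb Hf] Hm]]|[j [Hj /sat_and [Hb Hf] Hm]]];
      exists j; split=> //.
    * have [Ha _] := H w (upd nu v j); apply/Ha => //; by rewrite upd_same.
    * have [_ Ha] := H w (upd nu v j); apply/Ha => //; by rewrite upd_same.
  + move=> [j [Hj Hb Hm]].
    have [Ha Hb'] := H w (upd nu v j); rewrite upd_same in Ha Hb'.
    case: (classic (sat_inv w (fun _ => j) f)) => Hf.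
    * by left; exists j; split=> //; [apply/sat_and | apply/Ha].
    * by right; exists j; split=> //; [apply/sat_and | apply/Hb'].
- subst u.
  have [F1 HF1] := IH m1 Hm1 v beta.
  have [F0 HF0] := IH m0 Hm0 v beta.
  exists (IOr (IAnd (atvar (~~ v) f) F1) (IAnd (INot (atvar (~~ v) f)) F0)).
  move=> w nu iS.
  have HB : sat_inv w nu (atvar (~~ v) f) <-> sat_inv w (fun _ => nu (~~ v)) f.
    by rewrite sat_atvar; split=> [[]|] //.
  have Hj : forall j, sat_inv w (fun _ => upd nu v j (~~ v)) f <->
     sat_inv w (fun _ => nu (~~ v)) f by move=> j; rewrite upd_other.
  case: (classic (sat_inv w (fun _ => nu (~~ v)) f)) => B.
  + have E : forall j, msat w (upd nu v j) m <-> msat w (upd nu v j) m1.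
      by move=> j; apply: (proj1 (H w (upd nu v j))); apply/Hj.
    split.
    * move=> /sat_or [/sat_and [_ HF]|/sat_and [Hn' _]]; last by case: Hn'; apply/HB.
      move/(HF1 w nu iS): HF => [j [Hjs Hb Hm]]; exists j; split=> //; apply/E; exact: Hm.
    * move=> [j [Hjs Hb Hm]]; apply/sat_or; left; apply/sat_and; split; first by apply/HB.
      by apply/(HF1 w nu iS); exists j; split=> //; apply/E; exact: Hm.
  + have E : forall j, msat w (upd nu v j) m <-> msat w (upd nu v j) m0.
      by move=> j; apply: (proj2 (H w (upd nu v j))) => /Hj.
    split.
    * move=> /sat_or [/sat_and [HB' _]|/sat_and [_ HF]]; first by case: B; apply/HB.
      move/(HF0 w nu iS): HF => [j [Hjs Hb Hm]]; exists j; split=> //; apply/E; exact: Hm.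
    * move=> [j [Hjs Hb Hm]]; apply/sat_or; right; apply/sat_and; split.
        by move/HB.
      by apply/(HF0 w nu iS); exists j; split=> //; apply/E; exact: Hm.
Qed.

End Core.


Lemma upd_range {A : eqType} (w : seq A) nu v i :
  (forall u, nu u < size w) -> i < size w -> forall u, upd nu v i u < size w.
Proof. by move=> H Hi u; rewrite /upd; case: (u == v). Qed.

Lemma upd_const nu v j u : upd (fun _ => nu (~~ v)) v j u = upd nu v j u.
Proof. by rewrite /upd; case: u; case: v. Qed.

Lemma th2mix (A : finType) (g : fo2th A) : exists m : mix A, forall w nu,
  (forall u, nu u < size w) -> (sat_th w nu g <-> msat w nu m).
Proof.
elim: g => [|u v|u v|a u|a k u v|g [m IH]|g [m1 IH1] h [m2 IH2]|v g [m IH]].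
- by exists (MC _ false).
- by exists (MEq _ u v).
- by exists (MLt _ u v).
- by exists (MB (ILetter a false) u).
- by exists (MThr a k u v).
- exists (MNot m) => w nu R /=; have := IH w nu R; tauto.
- exists (MOr m1 m2) => w nu R /=; have := IH1 w nu R; have := IH2 w nu R; tauto.
- have [f Hf] := KEY (leqnn (nb m)) v ITrue.
  exists (MB f (~~ v)) => w nu R /=.
  rewrite (Hf w (fun _ => nu (~~ v)) (R _)); split.
  + move=> [i [Hi Hs]]; exists i; split=> //.
    apply/(msat_ext w m (upd_const nu v i)); apply/IH => //.
    exact: upd_range.
  + move=> [i [Hi _ Hs]]; exists i; split=> //; apply/(IH _ _ (upd_range v R Hi)).
    by apply/(msat_ext w m (upd_const nu v i)).
Qed.

Definition beta0 {A} : fo2inv A := INot (IEx true (ILt A true false)).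
Definition Efm {A} : fo2inv A := INot (IEx false ITrue).

Lemma th_to_inv (A : finType) (L : seq A -> Prop) :
  th_definable L -> inv_definable L.
Proof.
move=> [g [_ HL]]; have [m Hm] := th2mix g.
have [F HF] := KEY (leqnn (nb m)) true beta0.
pose Main := IEx true (IEx false (IAnd beta0 F)).
have HMain : forall w, 0 < size w -> (sat_inv w nu0 Main <-> L w).
  move=> w w0; rewrite (HL w) (Hm w nu0 (fun _ => w0)); split.
  - move/sat_ex=> [y [Hy /sat_ex [i [Hi /sat_and [Hb HF']]]]].
    have i0 : i = 0.
      case: (posnP i) => // ip; case: Hb; exists 0; split=> //.
    subst i; move: HF'; rewrite HF; last by rewrite /upd.
    move=> [j [Hj Hb' Hm']].
    have j0 : j = 0.
      case: (posnP j) => // jp; case: Hb'; exists 0; split=> //.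
    subst j; apply: (proj1 (msat_ext w m _) Hm') => u.
    by case: u; rewrite /upd.
  - move=> H; exists 0; split=> //; exists 0; split=> //.
    apply/sat_and; split.
      by move=> [k [Hk]]; rewrite /upd /=.
    rewrite HF; last by rewrite /upd.
    exists 0; split=> //.
      by move=> [k [Hk]]; rewrite /upd /=.
    apply: (proj1 (msat_ext w m _) H) => u.
    by case: u; rewrite /upd.
case: (classic (L [::])) => L0.
- exists (IOr Efm Main); split; first by case.
  case=> [|a w].
  + split=> // _; left; by move=> [i []].
  + rewrite -HMain //; split; first by right.
    move=> /sat_or [H|//]; exfalso; apply: H.
    by exists 0; split=> // -[].
- exists Main; split; first by case.
  case=> [|a w].
  + split=> //; by move=> [i []].
  + by rewrite -HMain.
Qed.


Fixpoint tr {A : Type} (f : fo2inv A) : fo2th A :=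
  match f with
  | IFalse => TFalse _
  | IEq u v => TEq _ u v
  | ILt u v => TLt _ u v
  | ILetter a u => TLetter a u
  | IBetween a u v => TThr a 1 u v
  | INot g => TNot (tr g)
  | IOr g h => TOr (tr g) (tr h)
  | IEx v g => TEx v (tr g)
  end.

Lemma tr_free {A : Type} (f : fo2inv A) v : free_th (tr f) v = free_inv f v.
Proof. elim: f => [|||||g IH|g IHg h IHh|u g IH] //=; by rewrite ?IH ?IHg ?IHh. Qed.

Lemma between_thr {A : eqType} (w : seq A) a i j :
  (exists z, i < z < j /\ onth w z = Some a) <-> (i < j /\ 0 < count_between w a i j).
Proof.
rewrite /count_between -has_count; split.
- move=> [z [/andP [iz zj] Hz]]; split; first exact: ltn_trans iz zj.
  apply/hasP; exists z; last by rewrite iz zj Hz eqxx.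
  rewrite mem_iota /= add0n.
  case: (ltnP z (size w)) => // Hs.
  by rewrite onth_default in Hz.
- move=> [_ /hasP [z _ /andP [Hb /eqP Hz]]]; by exists z.
Qed.

Lemma tr_sat {A : eqType} (w : seq A) (f : fo2inv A) nu :
  sat_inv w nu f <-> sat_th w nu (tr f).
Proof.
elim: f nu => [||||a u v | g IH | g IHg h IHh | u g IH] nu //=.
- exact: between_thr.
- by have := IH nu; tauto.
- by have := IHg nu; have := IHh nu; tauto.
- by split=> [[i [Hi /IH H]] | [i [Hi /IH H]]]; exists i; split.
Qed.

Lemma inv_to_th (A : finType) (L : seq A -> Prop) :
  inv_definable L -> th_definable L.
Proof.
move=> [f [Hs HL]]; exists (tr f); split.
- by move=> v; rewrite tr_free.
- by move=> w; have := tr_sat w f nu0; have := HL w; tauto.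
Qed.

Unset Implicit Arguments.

Theorem theorem1 (A : finType) (L : seq A -> Prop) :
  inv_definable L <-> th_definable L.
Proof.
split; [exact: inv_to_th | exact: th_to_inv].
Qed.
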